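(* For every $n\ge 9$, the graph $G_n$ is not an IP-SEG graph.
   Context: Let $L_1$ and $L_2$ be two distinct parallel horizontal lines in the plane. A closed straight line segment is an interval segment if both of its endpoints lie on the same line $L_i$, and a permutation segment if one endpoint lies on $L_1$ and the other on $L_2$. An IP-SEG model is a finite family of interval and permutation segments; its intersection graph has one vertex per segment, adjacent iff the segments intersect. A graph is an IP-SEG graph if it is isomorphic to the intersection graph of an IP-SEG model. For $n\ge 3$, $G_n$ is the graph on $3n$ vertices $v_1,\dots,v_n,w_1,\dots,w_n,z_1,\dots,z_n$ whose edges are $v_iv_{i+1}$ (indices mod $n$), $v_iw_i$ and $w_iz_i$ for $1\le i\le n$, and no others. *)

(* Defs.v *)
From Stdlib Require Import Reals List.
Open Scope R_scope.

Definition point := (R * R)%type.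
Definition segment := (point * point)%type.

Definition on_hline (c : R) (p : point) : Prop := snd p = c.

Definition in_segment (p : point) (s : segment) : Prop :=
  exists t : R, 0 <= t <= 1 /\
    fst p = (1 - t) * fst (fst s) + t * fst (snd s) /\
    snd p = (1 - t) * snd (fst s) + t * snd (snd s).

Definition segments_intersect (s1 s2 : segment) : Prop :=
  exists p : point, in_segment p s1 /\ in_segment p s2.

(* L1 : y = y1, L2 : y = y2. *)
Definition interval_segment (y1 y2 : R) (s : segment) : Prop :=
  fst s <> snd s /\
  ((on_hline y1 (fst s) /\ on_hline y1 (snd s)) \/
   (on_hline y2 (fst s) /\ on_hline y2 (snd s))).

Definition permutation_segment (y1 y2 : R) (s : segment) : Prop :=
  (on_hline y1 (fst s) /\ on_hline y2 (snd s)) \/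
  (on_hline y2 (fst s) /\ on_hline y1 (snd s)).

Definition IP_SEG_model (y1 y2 : R) (M : list segment) : Prop :=
  Forall (fun s => interval_segment y1 y2 s \/ permutation_segment y1 y2 s) M.

Definition default_segment : segment := ((0, 0), (0, 0)).

Definition ig_vertex (M : list segment) : Type := { k : nat | (k < length M)%nat }.

Definition ig_adj (M : list segment) (u v : ig_vertex M) : Prop :=
  proj1_sig u <> proj1_sig v /\
  segments_intersect (nth (proj1_sig u) M default_segment)
                     (nth (proj1_sig v) M default_segment).

Definition graph_iso (V W : Type) (adjV : V -> V -> Prop) (adjW : W -> W -> Prop) : Prop :=
  exists (f : V -> W) (g : W -> V),
    (forall x, g (f x) = x) /\ (forall y, f (g y) = y) /\
    (forall u v, adjV u v <-> adjW (f u) (f v)).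

Definition IP_SEG_graph (y1 y2 : R) (V : Type) (adj : V -> V -> Prop) : Prop :=
  exists M : list segment, IP_SEG_model y1 y2 M /\ graph_iso V (ig_vertex M) adj (ig_adj M).

(* The graph G_n: vertices v_i, w_i, z_i for i = 0..n-1 (0-indexed). *)
Inductive vkind := KV | KW | KZ.

Definition Gn_vertex (n : nat) : Type := { p : vkind * nat | (snd p < n)%nat }.

Definition Gn_adj_raw (n : nat) (a b : vkind * nat) : Prop :=
  let (k, i) := a in let (l, j) := b in
  (k = KV /\ l = KV /\ (j = Nat.modulo (S i) n \/ i = Nat.modulo (S j) n)) \/
  (k = KV /\ l = KW /\ i = j) \/ (k = KW /\ l = KV /\ i = j) \/
  (k = KW /\ l = KZ /\ i = j) \/ (k = KZ /\ l = KW /\ i = j).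

Definition Gn_adj (n : nat) (u v : Gn_vertex n) : Prop :=
  Gn_adj_raw n (proj1_sig u) (proj1_sig v).

(* Main.v *)
Require Import Defs.
From Stdlib Require Import Reals List Lra Lia Psatz Classical Arith.
Open Scope R_scope.

Inductive code := CP (a b : R) | CI1 (l r : R) | CI2 (l r : R).

Definition wf (c : code) : Prop :=
  match c with CP _ _ => True | CI1 l r => l <= r | CI2 l r => l <= r end.

Definition meets (c d : code) : Prop :=
  match c, d with
  | CP a b, CP a' b' => ~ (a < a' /\ b < b') /\ ~ (a' < a /\ b' < b)
  | CP a b, CI1 l r => l <= a <= r
  | CI1 l r, CP a b => l <= a <= r
  | CP a b, CI2 l r => l <= b <= r
  | CI2 l r, CP a b => l <= b <= r
  | CI1 l r, CI1 l' r' => l <= r' /\ l' <= r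
  | CI2 l r, CI2 l' r' => l <= r' /\ l' <= r
  | _, _ => False
  end.

Definition inC (y1 y2 : R) (c : code) (p : point) : Prop :=
  match c with
  | CP a b => exists t, 0 <= t <= 1 /\ fst p = a + t * (b - a) /\ snd p = y1 + t * (y2 - y1)
  | CI1 l r => snd p = y1 /\ l <= fst p <= r
  | CI2 l r => snd p = y2 /\ l <= fst p <= r
  end.

Lemma tzero y1 y2 t : y1 <> y2 -> y1 + t * (y2 - y1) = y1 -> t = 0.
Proof. intros H E. assert (t * (y2 - y1) = 0) by lra.
  destruct (Rmult_integral _ _ H0); [auto| lra]. Qed.

Lemma tone y1 y2 t : y1 <> y2 -> y1 + t * (y2 - y1) = y2 -> t = 1.
Proof. intros H E. assert ((t - 1) * (y2 - y1) = 0) by lra.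
  destruct (Rmult_integral _ _ H0); lra. Qed.

Lemma teq y1 y2 t t' : y1 <> y2 -> y1 + t * (y2 - y1) = y1 + t' * (y2 - y1) -> t = t'.
Proof. intros H E. assert ((t - t') * (y2 - y1) = 0) by lra.
  destruct (Rmult_integral _ _ H0); lra. Qed.

Lemma m_PP y1 y2 a b a' b' : y1 <> y2 ->
  ((exists p, inC y1 y2 (CP a b) p /\ inC y1 y2 (CP a' b') p) <-> meets (CP a b) (CP a' b')).
Proof.
  intros Hy; simpl; split.
  - intros [p [[t [Ht [Hx Hyy]]] [t' [Ht' [Hx' Hy']]]]].
    assert (t = t') by (eapply teq; eauto; lra). subst t'.
    split; intros [H1 H2].
    + destruct (Rle_dec (b' - b) (a' - a)); nra.
    + destruct (Rle_dec (b - b') (a - a')); nra.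
  - intros [H1 H2].
    destruct (Req_dec (a - a') (b - b')) as [E|E].
    + assert (a = a') by (destruct (Rlt_le_dec a a'); destruct (Rlt_le_dec a' a); lra).
      exists (a, y1). split; exists 0; simpl; repeat split; lra.
    + set (t := (a - a') / ((a - a') - (b - b'))).
      assert (Ht : t * ((a - a') - (b - b')) = a - a') by (unfold t; field; lra).
      assert (Hb : 0 <= t <= 1).
      { destruct (Rlt_le_dec 0 ((a - a') - (b - b'))).
        - destruct (Rlt_le_dec a a'); destruct (Rlt_le_dec b' b); try lra;
          destruct (Rlt_le_dec b b'); destruct (Rlt_le_dec a' a); split; nra.
        - destruct (Rlt_le_dec a a'); destruct (Rlt_le_dec b' b); try lra;
          destruct (Rlt_le_dec b b'); destruct (Rlt_le_dec a' a); split; nra. }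
      exists (a + t * (b - a), y1 + t * (y2 - y1)). split; exists t; simpl; repeat split; try lra.
Qed.

Lemma meets_sym c d : meets c d <-> meets d c.
Proof. destruct c, d; simpl; tauto. Qed.

Lemma meets_iff y1 y2 c d : y1 <> y2 -> wf c -> wf d ->
  ((exists p, inC y1 y2 c p /\ inC y1 y2 d p) <-> meets c d).
Proof.
  intros Hy.
  assert (PI1 : forall a b l r, (exists p, inC y1 y2 (CP a b) p /\ inC y1 y2 (CI1 l r) p) <-> l <= a <= r).
  { intros a b l r; simpl; split.
    - intros [p [[t [Ht [Hx Hyy]]] [Hy' Hl]]].
      assert (t = 0) by (eapply tzero; eauto; lra). subst. lra.
    - intros H. exists (a, y1). split; [exists 0|]; simpl; repeat split; lra. }
  assert (PI2 : forall a b l r, (exists p, inC y1 y2 (CP a b) p /\ inC y1 y2 (CI2 l r) p) <-> l <= b <= r).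
  { intros a b l r; simpl; split.
    - intros [p [[t [Ht [Hx Hyy]]] [Hy' Hl]]].
      assert (t = 1) by (eapply tone; eauto; lra). subst. lra.
    - intros H. exists (b, y2). split; [exists 1|]; simpl; repeat split; lra. }
  assert (SW : forall c d, (exists p, inC y1 y2 c p /\ inC y1 y2 d p) <-> (exists p, inC y1 y2 d p /\ inC y1 y2 c p)).
  { intros; split; intros [p [A B]]; exists p; auto. }
  intros Hc Hd; destruct c as [a b|l r|l r], d as [a' b'|l' r'|l' r'].
  - apply m_PP; auto.
  - apply PI1.
  - apply PI2.
  - rewrite SW, PI1. simpl; tauto.
  - simpl in *; split.
    + intros [p [[E1 H1] [E2 H2]]]; lra.
    + intros [H1 H2]. exists (Rmax l l', y1). simpl.
      unfold Rmax; destruct (Rle_dec l l'); repeat split; lra.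
  - simpl; split; [intros [p [[E1 _] [E2 _]]]; lra | tauto].
  - rewrite SW, PI2. simpl; tauto.
  - simpl; split; [intros [p [[E1 _] [E2 _]]]; lra | tauto].
  - simpl in *; split.
    + intros [p [[E1 H1] [E2 H2]]]; lra.
    + intros [H1 H2]. exists (Rmax l l', y2). simpl.
      unfold Rmax; destruct (Rle_dec l l'); repeat split; lra.
Qed.

Definition code_of (y1 : R) (s : segment) : code :=
  match s with ((x1, z1), (x2, z2)) =>
  if Req_dec_T z1 y1 then (if Req_dec_T z2 y1 then CI1 (Rmin x1 x2) (Rmax x1 x2) else CP x1 x2)
  else (if Req_dec_T z2 y1 then CP x2 x1 else CI2 (Rmin x1 x2) (Rmax x1 x2)) end.

Definition IPs y1 y2 s := interval_segment y1 y2 s \/ permutation_segment y1 y2 s.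

Lemma hull x1 x2 x : (exists t, 0 <= t <= 1 /\ x = (1 - t) * x1 + t * x2) <-> Rmin x1 x2 <= x <= Rmax x1 x2.
Proof.
  split.
  - intros [t [Ht E]]. unfold Rmin, Rmax; destruct (Rle_dec x1 x2); split; nra.
  - intros H. destruct (Req_dec x1 x2) as [E|E].
    + subst. rewrite Rmin_left, Rmax_left in H by lra. exists 0; split; lra.
    + assert (Ht : (x - x1) / (x2 - x1) * (x2 - x1) = x - x1) by (field; lra).
      set (t := (x - x1) / (x2 - x1)) in *. exists t.
      split.
      * unfold Rmin, Rmax in H; destruct (Rle_dec x1 x2); split; nra.
      * nra.
Qed.

Lemma code_in y1 y2 s : y1 <> y2 -> IPs y1 y2 s ->
  wf (code_of y1 s) /\ forall p, in_segment p s <-> inC y1 y2 (code_of y1 s) p.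
Proof.
  intros Hy Hs. destruct s as [[x1 z1] [x2 z2]].
  unfold IPs, interval_segment, permutation_segment, on_hline in Hs; simpl in Hs.
  assert (C : (z1 = y1 /\ z2 = y1) \/ (z1 = y2 /\ z2 = y2) \/ (z1 = y1 /\ z2 = y2) \/ (z1 = y2 /\ z2 = y1)) by tauto.
  unfold in_segment, code_of; simpl.
  destruct C as [[-> ->]|[[-> ->]|[[-> ->]|[-> ->]]]].
  - destruct (Req_dec_T y1 y1); [|congruence]. split.
    + simpl. apply Rle_trans with x1; [apply Rmin_l | apply Rmax_l].
    + intros p. simpl. rewrite <- hull. split.
      * intros [t [Ht [E1 E2]]]. split; [lra| exists t; split; [auto|lra]].
      * intros [E [t [Ht E1]]]. exists t; split; [auto|split; lra].
  - destruct (Req_dec_T y2 y1); [congruence|]. split.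
    + simpl. apply Rle_trans with x1; [apply Rmin_l | apply Rmax_l].
    + intros p. simpl. rewrite <- hull. split.
      * intros [t [Ht [E1 E2]]]. split; [lra| exists t; split; [auto|lra]].
      * intros [E [t [Ht E1]]]. exists t; split; [auto|split; lra].
  - destruct (Req_dec_T y1 y1); [|congruence]. destruct (Req_dec_T y2 y1); [congruence|].
    split; [simpl; auto|]. intros p; simpl. split.
    + intros [t [Ht [E1 E2]]]. exists t; repeat split; lra.
    + intros [t [Ht [E1 E2]]]. exists t; repeat split; lra.
  - destruct (Req_dec_T y2 y1); [congruence|]. destruct (Req_dec_T y1 y1); [|congruence].
    split; [simpl; auto|]. intros p; simpl. split.
    + intros [t [Ht [E1 E2]]]. exists (1 - t); repeat split; lra.
    + intros [t [Ht [E1 E2]]]. exists (1 - t); repeat split; lra.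
Qed.

Lemma seg_meets y1 y2 s s' : y1 <> y2 -> IPs y1 y2 s -> IPs y1 y2 s' ->
  (segments_intersect s s' <-> meets (code_of y1 s) (code_of y1 s')).
Proof.
  intros Hy Hs Hs'. destruct (code_in _ _ _ Hy Hs) as [W1 I1].
  destruct (code_in _ _ _ Hy Hs') as [W2 I2].
  rewrite <- (meets_iff y1 y2) by auto. unfold segments_intersect.
  split; intros [p [A B]]; exists p; [rewrite <- I1, <- I2 | rewrite I1, I2]; auto.
Qed.

Definition adjOK (n : nat) (c : vkind -> nat -> code) : Prop :=
  (forall k i, (i < n)%nat -> wf (c k i)) /\
  (forall k i l j, (i < n)%nat -> (j < n)%nat -> (k, i) <> (l, j) ->
     (Gn_adj_raw n (k, i) (l, j) <-> meets (c k i) (c l j))).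

Lemma extract (n : nat) y1 y2 : y1 <> y2 -> IP_SEG_graph y1 y2 (Gn_vertex n) (Gn_adj n) ->
  exists c, adjOK n c.
Proof.
  intros Hy [M [HM [f [g [Hgf [Hfg Hadj]]]]]].
  assert (HIP : forall (x : ig_vertex M), IPs y1 y2 (nth (proj1_sig x) M default_segment)).
  { intros [k Hk]; simpl. unfold IP_SEG_model in HM. rewrite Forall_forall in HM.
    apply HM. apply nth_In; auto. }
  exists (fun k i => match lt_dec i n with
     | left H => code_of y1 (nth (proj1_sig (f (exist (fun p : vkind * nat => (snd p < n)%nat) (k, i) H))) M default_segment)
     | right _ => CP 0 0 end).
  split.
  - intros k i Hi. destruct (lt_dec i n) as [H|H]; [|lia].
    apply (code_in y1 y2); auto.
  - intros k i l j Hi Hj Hne.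
    destruct (lt_dec i n) as [H1|H1]; [|lia]. destruct (lt_dec j n) as [H2|H2]; [|lia].
    set (u := exist (fun p : vkind * nat => (snd p < n)%nat) (k, i) H1).
    set (v := exist (fun p : vkind * nat => (snd p < n)%nat) (l, j) H2).
    rewrite <- (seg_meets y1 y2) by (auto; apply HIP).
    change (Gn_adj_raw n (k, i) (l, j)) with (Gn_adj n u v).
    rewrite (Hadj u v). unfold ig_adj. split; [tauto|]. intros HI; split; auto.
    intros E. apply Hne.
    assert (f u = f v).
    { destruct (f u) as [x hx], (f v) as [y hy]; simpl in E; subst y.
      f_equal. apply Peano_dec.le_unique. }
    assert (u = v) by (rewrite <- (Hgf u), <- (Hgf v); congruence).
    change (proj1_sig u = proj1_sig v). congruence.
Qed.

Lemma modn (n k : nat) : (0 < n)%nat -> ((k + n) mod n = k mod n)%nat.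
Proof. intros. replace (k + n)%nat with (k + 1 * n)%nat by lia. apply Nat.Div0.mod_add. Qed.

Lemma modneq (n k d : nat) : (0 < n)%nat -> (1 <= d <= n - 1)%nat -> ((k + d) mod n <> k mod n)%nat.
Proof.
  intros Hn Hd. rewrite <- Nat.Div0.add_mod_idemp_l.
  assert (Hr : (k mod n < n)%nat) by (apply Nat.mod_upper_bound; lia).
  set (r := (k mod n)%nat) in *.
  destruct (lt_dec (r + d) n).
  - rewrite Nat.mod_small by lia. lia.
  - replace (r + d)%nat with ((r + d - n) + 1 * n)%nat by lia.
    rewrite Nat.Div0.mod_add. rewrite Nat.mod_small by lia. lia.
Qed.

Lemma modS (n k : nat) : (0 < n)%nat -> (S (k mod n) mod n = S k mod n)%nat.
Proof. intros. replace (S (k mod n)) with (k mod n + 1)%nat by lia.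
  rewrite Nat.Div0.add_mod_idemp_l. f_equal; lia. Qed.

Definition V n c (k : nat) : code := c KV (k mod n)%nat.
Definition W n c (k : nat) : code := c KW (k mod n)%nat.
Definition Z n c (k : nat) : code := c KZ (k mod n)%nat.


Lemma ltmod n k : (0 < n)%nat -> (k mod n < n)%nat.
Proof. intros; apply Nat.mod_upper_bound; lia. Qed.

Lemma wfV n c k : (0 < n)%nat -> adjOK n c -> wf (V n c k).
Proof. intros Hn [H _]. apply H, ltmod; auto. Qed.

Lemma E1 n c k : (2 <= n)%nat -> adjOK n c -> meets (V n c k) (V n c (S k)).
Proof.
  intros Hn [_ H]. unfold V. apply H; try apply ltmod; try lia.
  - intros E. injection E. intros E'. replace (S k) with (k + 1)%nat in E' by lia.
    apply (modneq n k 1); auto; lia.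
  - simpl. left. repeat split. left. rewrite modS by lia. auto.
Qed.

Lemma E2 n c k d : (0 < n)%nat -> (2 <= d <= n - 2)%nat -> adjOK n c -> ~ meets (V n c k) (V n c (k + d)).
Proof.
  intros Hn Hd [_ H]. unfold V. rewrite <- H; try apply ltmod; try lia.
  - simpl. intros [[_ [_ [E|E]]]|HH]; [ | | decompose [and or] HH; discriminate].
    + rewrite modS in E by lia. replace (S k) with (k + 1)%nat in E by lia.
      replace (k + d)%nat with ((k + 1) + (d - 1))%nat in E by lia.
      apply (modneq n (k+1) (d-1)); auto; lia.
    + rewrite modS in E by lia. replace (S (k + d)) with (k + (d + 1))%nat in E by lia.
      apply (modneq n k (d+1)); auto; lia.
  - intros E. injection E. intros E'. apply (modneq n k d); auto; lia.
Qed.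

Lemma E3 n c k : adjOK n c -> (0 < n)%nat -> meets (V n c k) (W n c k).
Proof. intros [_ H] Hn. unfold V, W. apply H; try apply ltmod; auto; [congruence|]. simpl; tauto. Qed.

Lemma E3' n c k : adjOK n c -> (0 < n)%nat -> meets (W n c k) (Z n c k).
Proof. intros [_ H] Hn. unfold W, Z. apply H; try apply ltmod; auto; [congruence|]. simpl; tauto. Qed.

Lemma E4 n c k m : adjOK n c -> (0 < n)%nat -> (k mod n <> m mod n)%nat -> ~ meets (W n c k) (V n c m).
Proof. intros [_ H] Hn Hne. unfold W, V. rewrite <- H; try apply ltmod; auto; [|congruence].
  simpl. intuition congruence. Qed.

Lemma E5 n c k m : adjOK n c -> (0 < n)%nat -> ~ meets (Z n c k) (V n c m).
Proof. intros [_ H] Hn. unfold Z, V. rewrite <- H; try apply ltmod; auto; [|congruence].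
  simpl. intuition congruence. Qed.

Definition leftP (w c : code) : Prop :=
  match w with
  | CP a b => match c with CP a' b' => a' < a /\ b' < b | CI1 l r => r < a | CI2 l r => r < b end
  | _ => False end.
Definition rightP (w c : code) : Prop :=
  match w with
  | CP a b => match c with CP a' b' => a < a' /\ b < b' | CI1 l r => a < l | CI2 l r => b < l end
  | _ => False end.
Definition isP (c : code) : Prop := exists a b, c = CP a b.

Lemma L_dich w c : isP w -> ~ meets w c -> leftP w c \/ rightP w c.
Proof.
  intros [a [b ->]] H. destruct c as [a' b'|l r|l r]; simpl in *.
  - apply not_and_or in H. destruct H as [H|H]; apply NNPP in H; tauto.
  - destruct (Rlt_le_dec r a); [left; auto|]. destruct (Rlt_le_dec a l); [right; auto|]. lra.
  - destruct (Rlt_le_dec r b); [left; auto|]. destruct (Rlt_le_dec b l); [right; auto|]. lra.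
Qed.

Lemma L_sep w c d : leftP w c -> rightP w d -> ~ meets c d.
Proof.
  destruct w as [a b| |]; simpl; try tauto.
  destruct c, d; simpl; intros; try lra; try tauto.
Qed.

Lemma L_excl w c : wf c -> leftP w c -> rightP w c -> False.
Proof. destruct w as [a b| |]; simpl; try tauto. destruct c; simpl; intros; lra. Qed.

Lemma L_PPl w c : leftP w c -> leftP c w -> False.
Proof. destruct w as [a b| |]; simpl; try tauto. destruct c; simpl; intros; lra. Qed.
Lemma L_PPr w c : rightP w c -> rightP c w -> False.
Proof. destruct w as [a b| |]; simpl; try tauto. destruct c; simpl; intros; lra. Qed.

Lemma path_side n c w s m : (2 <= n)%nat -> adjOK n c -> isP w ->
  (forall e, (e <= m)%nat -> ~ meets w (V n c (s + e))) ->
  forall e, (e <= m)%nat ->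
   (leftP w (V n c s) -> leftP w (V n c (s + e))) /\ (rightP w (V n c s) -> rightP w (V n c (s + e))).
Proof.
  intros Hn Hc Hw Hm e. induction e as [|e IH]; intros He.
  - rewrite Nat.add_0_r. tauto.
  - destruct IH as [IL IR]; [lia|].
    assert (HM : meets (V n c (s + e)) (V n c (s + S e))).
    { replace (s + S e)%nat with (S (s + e)) by lia. apply E1; auto. }
    destruct (L_dich w (V n c (s + S e)) Hw (Hm _ He)) as [D|D]; split; intros H0; auto.
    + exfalso. eapply L_sep; [apply D| apply IR; auto | rewrite meets_sym; apply HM].
    + exfalso. eapply L_sep; [apply IL; auto| apply D | apply HM].
Qed.

Lemma out_pt t lu ru l r : lu <= ru -> meets t (CI1 lu ru) -> ~ meets t (CI1 l r) ->
  exists q, lu <= q <= ru /\ (q < l \/ r < q).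
Proof.
  intros Wu Hm Hn. destruct t as [a1 b1|l1 r1|l1 r1]; simpl in *; try contradiction.
  - exists a1. split; [lra|]. destruct (Rlt_le_dec a1 l); [left; auto|].
    destruct (Rlt_le_dec r a1); [right; auto|]. exfalso; apply Hn; lra.
  - destruct (Rlt_le_dec r l1).
    + exists (Rmax lu l1). unfold Rmax; destruct (Rle_dec lu l1); (split; [split|right]); lra.
    + destruct (Rlt_le_dec r1 l).
      * exists (Rmin ru r1). unfold Rmin; destruct (Rle_dec ru r1); (split; [split|left]); lra.
      * exfalso; apply Hn; lra.
Qed.

Lemma coreA1 u l r x t1 t2 w z : wf u -> l <= r -> wf x ->
  ~ isP u -> ~ isP x ->
  meets u (CI1 l r) -> meets x (CI1 l r) -> ~ meets u x -> meets t1 u -> ~ meets t1 (CI1 l r) ->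
  meets t2 x -> ~ meets t2 (CI1 l r) -> meets w (CI1 l r) -> ~ meets w u -> ~ meets w x ->
  meets z w -> ~ meets z (CI1 l r) ->
  (leftP w u /\ rightP w x) \/ (rightP w u /\ leftP w x).
Proof.
  intros Wu Wv Wx Pu Px Huv Hxv Hux H1u H1v H2x H2v Hwv Hwu Hwx Hzw Hzv.
  destruct u as [? ?|lu ru|lu ru]; [exfalso; apply Pu; do 2 eexists; eauto| |simpl in Huv; contradiction].
  destruct x as [? ?|lx rx|lx rx]; [exfalso; apply Px; do 2 eexists; eauto| |simpl in Hxv; contradiction].
  simpl in Wu, Wx, Huv, Hxv, Hux.
  destruct (out_pt t1 lu ru l r Wu H1u H1v) as [q1 [Q1 Q1']].
  destruct (out_pt t2 lx rx l r Wx H2x H2v) as [q2 [Q2 Q2']].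
  assert (O : ru < lx \/ rx < lu).
  { destruct (Rlt_le_dec ru lx); [left; auto|]. destruct (Rlt_le_dec rx lu); [right; auto|].
    exfalso; apply Hux; lra. }
  destruct w as [aw bw|lw rw|lw rw]; simpl in Hwv; try contradiction; simpl in Hwu, Hwx.
  - simpl. destruct O as [O|O].
    + left. split.
      * destruct (Rlt_le_dec ru aw); auto. exfalso; apply Hwu. destruct Q1'; lra.
      * destruct (Rlt_le_dec aw lx); auto. exfalso; apply Hwx. destruct Q2'; lra.
    + right. split.
      * destruct (Rlt_le_dec aw lu); auto. exfalso; apply Hwu. destruct Q1'; lra.
      * destruct (Rlt_le_dec rx aw); auto. exfalso; apply Hwx. destruct Q2'; lra.
  - exfalso.
    assert (Hin : l <= lw /\ rw <= r).
    { destruct O as [O|O].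
      - assert (lu < l) by (destruct Q1'; lra). assert (r < rx) by (destruct Q2'; lra).
        split.
        + destruct (Rlt_le_dec ru lw); [lra|]. destruct (Rlt_le_dec rw lu); [lra|]. exfalso; apply Hwu; lra.
        + destruct (Rlt_le_dec rw lx); [lra|]. destruct (Rlt_le_dec rx lw); [lra|]. exfalso; apply Hwx; lra.
      - assert (lx < l) by (destruct Q2'; lra). assert (r < ru) by (destruct Q1'; lra).
        split.
        + destruct (Rlt_le_dec rx lw); [lra|]. destruct (Rlt_le_dec rw lx); [lra|]. exfalso; apply Hwx; lra.
        + destruct (Rlt_le_dec rw lu); [lra|]. destruct (Rlt_le_dec ru lw); [lra|]. exfalso; apply Hwu; lra. }
    destruct z as [az bz|lz rz|lz rz]; simpl in Hzw, Hzv; try contradiction; apply Hzv; lra.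
Qed.

Definition flip (c : code) : code :=
  match c with CP a b => CP b a | CI1 l r => CI2 l r | CI2 l r => CI1 l r end.

Lemma meets_flip c d : meets (flip c) (flip d) <-> meets c d.
Proof. destruct c, d; simpl; tauto. Qed.
Lemma wf_flip c : wf (flip c) <-> wf c.
Proof. destruct c; simpl; tauto. Qed.
Lemma isP_flip c : isP (flip c) <-> isP c.
Proof. unfold isP; destruct c; simpl; split; intros [p [q E]]; try discriminate;
  injection E; intros; subst; eauto. Qed.
Lemma leftP_flip w c : leftP (flip w) (flip c) <-> leftP w c.
Proof. destruct w, c; simpl; tauto. Qed.
Lemma rightP_flip w c : rightP (flip w) (flip c) <-> rightP w c.
Proof. destruct w, c; simpl; tauto. Qed.

Lemma coreA u v x t1 t2 w z : wf u -> wf v -> wf x ->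
  ~ isP u -> ~ isP v -> ~ isP x ->
  meets u v -> meets x v -> ~ meets u x -> meets t1 u -> ~ meets t1 v ->
  meets t2 x -> ~ meets t2 v -> meets w v -> ~ meets w u -> ~ meets w x ->
  meets z w -> ~ meets z v ->
  (leftP w u /\ rightP w x) \/ (rightP w u /\ leftP w x).
Proof.
  intros Wu Wv Wx Pu Pv Px. destruct v as [a b|l r|l r].
  - exfalso; apply Pv; do 2 eexists; eauto.
  - apply coreA1; auto.
  - intros. rewrite <- !(leftP_flip w), <- !(rightP_flip w).
    apply (coreA1 _ l r _ (flip t1) (flip t2) _ (flip z));
      try rewrite wf_flip; try rewrite isP_flip; auto;
      try (change (CI1 l r) with (flip (CI2 l r))); rewrite ?meets_flip; auto.
Qed.

Lemma leftP_isP w c : leftP w c -> isP w.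
Proof. destruct w; simpl; try tauto; intros; do 2 eexists; eauto. Qed.
Lemma rightP_isP w c : rightP w c -> isP w.
Proof. destruct w; simpl; try tauto; intros; do 2 eexists; eauto. Qed.

Lemma Veq n c k k' : (k mod n = k' mod n)%nat -> V n c k = V n c k'.
Proof. unfold V; intros ->; auto. Qed.

Lemma G1 n c k : (9 <= n)%nat -> adjOK n c ->
  isP (V n c (k+1)) \/ isP (V n c (k+2)) \/ isP (V n c (k+3)).
Proof.
  intros Hn Hc.
  destruct (classic (isP (V n c (k+1)))) as [?|P1]; auto.
  destruct (classic (isP (V n c (k+2)))) as [?|P2]; auto.
  destruct (classic (isP (V n c (k+3)))) as [?|P3]; auto.
  exfalso.
  assert (Hn0 : (0 < n)%nat) by lia. assert (Hn2 : (2 <= n)%nat) by lia.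
  assert (M1 : forall j, meets (V n c j) (V n c (j + 1))).
  { intros j. replace (j + 1)%nat with (S j) by lia. apply E1; auto. }
  assert (N2 : forall j, ~ meets (V n c j) (V n c (j + 2))).
  { intros j. apply E2; auto; lia. }
  assert (WV : forall j d, (1 <= d <= n - 1)%nat -> ~ meets (W n c j) (V n c (j + d))).
  { intros j d Hd. apply E4; auto. intros E. apply (modneq n j d); auto. }
  assert (WV' : ~ meets (W n c (k+2)) (V n c (k+1))).
  { rewrite (Veq n c (k+1) (k+2+(n-1))). apply WV; lia.
    replace (k+2+(n-1))%nat with (k+1+n)%nat by lia. rewrite modn; auto. }
  destruct (coreA (V n c (k+1)) (V n c (k+2)) (V n c (k+3)) (V n c k) (V n c (k+4))
     (W n c (k+2)) (Z n c (k+2))) as [[A B]|[A B]];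
    try apply wfV; auto.
  - replace (k+2)%nat with (k+1+1)%nat by lia. apply M1.
  - rewrite meets_sym. replace (k+3)%nat with (k+2+1)%nat by lia. apply M1.
  - replace (k+3)%nat with (k+1+2)%nat by lia. apply N2.
  - rewrite meets_sym. replace (k+4)%nat with (k+3+1)%nat by lia. apply M1.
  - rewrite meets_sym. replace (k+4)%nat with (k+2+2)%nat by lia. apply N2.
  - rewrite meets_sym. apply E3; auto.
  - replace (k+3)%nat with (k+2+1)%nat by lia. apply WV; lia.
  - rewrite meets_sym. apply E3'; auto.
  - apply E5; auto.
  -
    destruct (path_side n c (W n c (k+2)) (k+3) (n-2) Hn2 Hc (leftP_isP _ _ A)) with (e := (n-2)%nat)
      as [_ R]; try lia.
    { intros e He. replace (k+3+e)%nat with (k+2+(1+e))%nat by lia. apply WV; lia. }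
    specialize (R B). rewrite (Veq n c (k+3+(n-2)) (k+1)) in R.
    + exact (L_excl _ _ (wfV n c (k+1) Hn0 Hc) A R).
    + replace (k+3+(n-2))%nat with (k+1+n)%nat by lia. apply modn; auto.
  - destruct (path_side n c (W n c (k+2)) (k+3) (n-2) Hn2 Hc (leftP_isP _ _ B)) with (e := (n-2)%nat)
      as [L _]; try lia.
    { intros e He. replace (k+3+e)%nat with (k+2+(1+e))%nat by lia. apply WV; lia. }
    specialize (L B). rewrite (Veq n c (k+3+(n-2)) (k+1)) in L.
    + exact (L_excl _ _ (wfV n c (k+1) Hn0 Hc) L A).
    + replace (k+3+(n-2))%nat with (k+1+n)%nat by lia. apply modn; auto.
Qed.

Definition col n c j := leftP (V n c j) (V n c (j + 2)).

Lemma Pside n c j e : (9 <= n)%nat -> adjOK n c -> isP (V n c j) -> (e <= n - 4)%nat ->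
  (col n c j -> leftP (V n c j) (V n c (j + 2 + e))) /\
  (~ col n c j -> rightP (V n c j) (V n c (j + 2 + e))).
Proof.
  intros Hn Hc HP He. unfold col.
  assert (Hn0 : (0 < n)%nat) by lia. assert (Hn2 : (2 <= n)%nat) by lia.
  destruct (path_side n c (V n c j) (j + 2) (n - 4) Hn2 Hc HP) with (e := e) as [L R]; auto.
  { intros e' He'. replace (j + 2 + e')%nat with (j + (2 + e'))%nat by lia. apply E2; auto; lia. }
  split; auto. intros NL. apply R.
  destruct (L_dich (V n c j) (V n c (j + 2)) HP); auto.
  - apply E2; auto; lia.
  - contradiction.
Qed.

Lemma G2 n c k d : (9 <= n)%nat -> adjOK n c -> (2 <= d <= n - 2)%nat ->
  isP (V n c k) -> isP (V n c (k + d)) -> (col n c k <-> col n c (k + d)) -> False.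
Proof.
  intros Hn Hc Hd P1 P2 Hcol.
  assert (Hn0 : (0 < n)%nat) by lia.
  destruct (Pside n c k (d - 2) Hn Hc P1 ltac:(lia)) as [A1 A2].
  destruct (Pside n c (k + d) (n - d - 2) Hn Hc P2 ltac:(lia)) as [B1 B2].
  replace (k + 2 + (d - 2))%nat with (k + d)%nat in A1, A2 by lia.
  assert (EV : V n c (k + d + 2 + (n - d - 2)) = V n c k).
  { apply Veq. replace (k + d + 2 + (n - d - 2))%nat with (k + n)%nat by lia. apply modn; auto. }
  rewrite EV in B1, B2.
  destruct (classic (col n c k)) as [C|C].
  - apply (L_PPl _ _ (A1 C) (B1 (proj1 Hcol C))).
  - apply (L_PPr _ _ (A2 C) (B2 (fun H => C (proj2 Hcol H)))).
Qed.

Local Open Scope nat_scope.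
Lemma comb (n : nat) (P : nat -> Prop) (col : nat -> Prop) : (9 <= n)%nat ->
  (forall k, P (k+1) \/ P (k+2) \/ P (k+3)) ->
  (forall k d, (2 <= d <= n - 2)%nat -> P k -> P (k + d) -> (col k <-> col (k + d)) -> False) -> False.
Proof.
  intros Hn G1 G2.
  assert (D : forall i j, (i < j)%nat -> (2 <= j - i <= n - 2)%nat -> P i -> P j -> (col i <-> ~ col j)).
  { intros i j Hij Hd Pi Pj. replace j with (i + (j - i))%nat in * by lia.
    destruct (classic (col i)), (classic (col (i + (j - i)))); try tauto;
    (exfalso; apply (G2 i (j - i)); [lia|auto|auto|tauto]). }
  destruct (G1 0) as [Pa|[Pa|Pa]]; simpl in Pa;
  match type of Pa with P ?a0 => set (a := a0) in Pa end;
  assert (Ha : (1 <= a <= 3)%nat) by (unfold a; lia); clearbody a;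
  (destruct (G1 (a + 1)) as [Pb|[Pb|Pb]];
   match type of Pb with P ?b0 => set (b := b0) in Pb end;
   assert (Hb : (a + 2 <= b <= a + 4)%nat) by (unfold b; lia); clearbody b);
  (destruct (G1 (a + n - 5)) as [Pc|[Pc|Pc]];
   match type of Pc with P ?c0 => set (cc := c0) in Pc end;
   assert (Hc : (a + n - 4 <= cc <= a + n - 2)%nat) by (unfold cc; lia); clearbody cc);
  (pose proof (D a b ltac:(lia) ltac:(lia) Pa Pb) as Dab;
   pose proof (D a cc ltac:(lia) ltac:(lia) Pa Pc) as Dac;
   destruct (le_lt_dec 2 (cc - b)) as [Hbc|Hbc];
   [ pose proof (D b cc ltac:(lia) ltac:(lia) Pb Pc); tauto | ];
   assert (n = 9 /\ b = a + 4 /\ cc = a + 5)%nat as [-> [-> ->]] by lia;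
   destruct (G1 a) as [Pd|[Pd|Pd]];
   [ pose proof (D (a+1) (a+4) ltac:(lia) ltac:(lia) Pd Pb) as Ddb
   | pose proof (D a (a+2) ltac:(lia) ltac:(lia) Pa Pd); pose proof (D (a+2) (a+5) ltac:(lia) ltac:(lia) Pd Pc); tauto
   | pose proof (D a (a+3) ltac:(lia) ltac:(lia) Pa Pd); pose proof (D (a+3) (a+5) ltac:(lia) ltac:(lia) Pd Pc); tauto ];
   destruct (G1 (a + 5)) as [Pe|[Pe|Pe]];
   [ replace (a + 5 + 1)%nat with (a + 6)%nat in Pe by lia;
     pose proof (D a (a+6) ltac:(lia) ltac:(lia) Pa Pe); pose proof (D (a+4) (a+6) ltac:(lia) ltac:(lia) Pb Pe); tauto
   | replace (a + 5 + 2)%nat with (a + 7)%nat in Pe by lia;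
     pose proof (D a (a+7) ltac:(lia) ltac:(lia) Pa Pe); pose proof (D (a+4) (a+7) ltac:(lia) ltac:(lia) Pb Pe); tauto
   | replace (a + 5 + 3)%nat with (a + 8)%nat in Pe by lia;
     pose proof (D (a+4) (a+8) ltac:(lia) ltac:(lia) Pb Pe); pose proof (D (a+1) (a+8) ltac:(lia) ltac:(lia) Pd Pe); tauto ]).
Qed.

Local Open Scope R_scope.

Theorem mainTheorem10 (n : nat) (y1 y2 : R) :
  (9 <= n)%nat -> y1 <> y2 -> ~ IP_SEG_graph y1 y2 (Gn_vertex n) (Gn_adj n).
Proof.
  intros Hn Hy HG. destruct (extract n y1 y2 Hy HG) as [c Hc].
  apply (comb n (fun k => isP (V n c k)) (col n c) Hn).
  - intro k; apply G1; auto.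
  - intros k d Hd P1 P2 H. apply (G2 n c k d); auto.
Qed.
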